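(* For the anonymous MIS algorithm described in the context, under the adversarial distributed daemon and from any initial configuration, the execution reaches a stable configuration (one in which no rule is enabled on any node) with probability $1$, whatever the strategy of the daemon.
   Context: $G=(V,E)$ is a finite simple undirected graph; $N(u)$ is the open neighbourhood of $u$. Nodes are anonymous. A configuration assigns to each node $u$ a value $s_u\in\{\bot,\top\}$. A rule ''guard $\to$ command'' is enabled on $u$ in $\gamma$ if its guard holds there. A transition $\gamma\xrightarrow{t}\gamma'$ is given by a nonempty set $t$ of moves $(u,r)$ with $r$ enabled on $u$ in $\gamma$, at most one per node, all executed simultaneously from the values in $\gamma$ with independent random choices; other nodes keep their values. An execution is a sequence of consecutive transitions, stopping only at a stable configuration. The adversarial distributed daemon may choose, at each step and depending on the whole past, any valid nonempty set $t$ (no fairness constraint). The algorithm has the rules: (Candidacy) $s_u=\bot\wedge\forall v\in N(u),\ s_v=\bot\ \to\ s_u:=\top$. (Withdrawal?) $s_u=\top\wedge\exists v\in N(u),\ s_v=\top\ \to$ with probability $\frac12$ (independently) set $s_u:=\bot$, otherwise leave it unchanged. *)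

(* Defs.v *)
From HB Require Import structures.
From mathcomp Require Import all_boot all_order all_algebra.
From mathcomp Require Import all_classical all_reals all_analysis.
Set Implicit Arguments. Unset Strict Implicit. Unset Printing Implicit Defensive.
Import Order.TTheory GRing.Theory Num.Theory.
Local Open Scope ring_scope.

(* A configuration assigns to each node a value; true = ⊤, false = ⊥. *)
Definition config (T : finType) := {ffun T -> bool}.

Section MIS.
Variables (T : finType) (e : rel T).

Definition cand_enabled (s : config T) (u : T) : bool :=
  ~~ s u && [forall v, e u v ==> ~~ s v].

Definition withd_enabled (s : config T) (u : T) : bool :=
  s u && [exists v, e u v && s v].

Definition enabled (s : config T) (u : T) : bool :=
  cand_enabled s u || withd_enabled s u.

Definition enabled_set (s : config T) : {set T} := [set u | enabled s u].

Definition stable (s : config T) : bool := [forall u, ~~ enabled s u].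

(* A (deterministic, history-dependent) daemon strategy: given the whole
   past execution (the nonempty sequence of configurations so far, the last
   one being the current configuration), it chooses the set of activated
   nodes.  At most one rule is enabled on a node, so a set of moves is the
   same as a set of (enabled) nodes. *)
Definition daemon := seq (config T) -> {set T}.

Definition valid_daemon (d : daemon) : Prop :=
  forall (s0 : config T) (h : seq (config T)),
    ~~ stable (last s0 h) ->
    d (s0 :: h) != finset.set0 /\ d (s0 :: h) \subset enabled_set (last s0 h).

Variable R : realType.

Definition local_prob (s : config T) (t : {set T}) (u : T) (b : bool) : R :=
  if (u \in t) && cand_enabled s u then (b == true)%:R
  else if (u \in t) && withd_enabled s u then 2%:R^-1
  else (b == s u)%:R.

Definition trans_prob (s : config T) (t : {set T}) (s' : config T) : R :=
  \prod_(u : T) local_prob s t u (s' u).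

(* reach_prob d n s0 h = probability, under daemon d, that the execution whose
   past is s0 :: h reaches a stable configuration within n further steps
   (the execution stops exactly at stable configurations). *)
Fixpoint reach_prob (d : daemon) (n : nat) (s0 : config T) (h : seq (config T))
  : R :=
  if stable (last s0 h) then 1 else
  match n with
  | 0 => 0
  | n'.+1 => \sum_(s' : config T)
               trans_prob (last s0 h) (d (s0 :: h)) s' * reach_prob d n' s0 (rcons h s')
  end.

End MIS.

(* Main.v *)
Require Import Defs.
From HB Require Import structures.
From mathcomp Require Import all_boot all_order all_algebra.
From mathcomp Require Import zify.
Set Implicit Arguments. Unset Strict Implicit. Unset Printing Implicit Defensive.

Section Comp.
Variables (T : finType) (e : rel T).
Hypothesis e_sym : symmetric e.

Definition rel_in (A : {set T}) : rel T := fun x y => e x y && (x \in A) && (y \in A).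
Definition cls (A : {set T}) x : {set T} := [set y in A | connect (rel_in A) x y].
Definition comp (A : {set T}) : nat := #|[set cls A x | x in A]|.

Lemma rel_in_sym (A : {set T}) : symmetric (rel_in A).
Proof. by move=> x y; rewrite /rel_in e_sym andbAC andbC andbA. Qed.

Lemma cls_eq (A : {set T}) x y : y \in cls A x -> cls A y = cls A x.
Proof.
rewrite inE => /andP[yA cxy]; apply/setP => z; rewrite !inE.
case: (z \in A) => //=; apply/idP/idP => H.
  exact: connect_trans cxy H.
by apply: connect_trans H; rewrite (sym_connect_sym (@rel_in_sym A)).
Qed.

Lemma cls_self (A : {set T}) x : x \in A -> x \in cls A x.
Proof. by move=> xA; rewrite inE xA connect0. Qed.

Lemma cls_sub (A : {set T}) x : cls A x \subset A.
Proof. by apply/subsetP => y; rewrite inE => /andP[]. Qed.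

Lemma comp_le (A : {set T}) : comp A <= #|A|.
Proof. exact: leq_imset_card. Qed.

Lemma connect_closed (A C : {set T}) x y :
  (forall c, c \in C -> c \notin A) -> (forall a c, a \in A -> c \in C -> ~~ e a c) ->
  x \in A -> connect (rel_in (A :|: C)) x y -> (y \in A) && connect (rel_in A) x y.
Proof.
move=> dAC nAC xA /connectP[p pp ->]; elim: p x xA pp => [|z p IH] x xA /=.
  by rewrite xA connect0.
case/andP => /andP[/andP[exz _]] zAC pp.
have zA : z \in A.
  move: zAC; rewrite inE => /orP[//|zC]; by rewrite (negbTE (nAC _ _ xA zC)) in exz.
case/andP: (IH z zA pp) => -> Hc; rewrite andTb.
apply: connect_trans Hc; apply: connect1; by rewrite /rel_in exz xA zA.
Qed.

Lemma comp_add (A C : {set T}) :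
  (forall c, c \in C -> c \notin A) -> (forall a c, a \in A -> c \in C -> ~~ e a c) ->
  C != set0 -> (comp A).+1 <= comp (A :|: C).
Proof.
move=> dAC nAC /set0Pn[c cC].
have clsE x : x \in A -> cls (A :|: C) x = cls A x.
  move=> xA; apply/setP => y; rewrite !inE; apply/idP/idP.
    case/andP => _ H; exact: connect_closed dAC nAC xA H.
  case/andP => yA H; rewrite yA orTb /=.
  apply: connect_sub H => u v; rewrite /rel_in => /andP[/andP[euv uA] vA].
  by apply: connect1; rewrite euv !inE uA vA.
apply: proper_card; apply/properP; split.
  apply/subsetP => K /imsetP[x xA ->]; apply/imsetP; exists x; first by rewrite inE xA.
  by rewrite clsE.
exists (cls (A :|: C) c); first by apply/imsetP; exists c => //; rewrite inE cC orbT.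
apply/imsetP => -[x xA Heq].
have : c \in cls A x by rewrite -Heq inE !inE cC orbT connect0.
move/(subsetP (cls_sub A x)) => cA.
by move: (dAC c cC); rewrite cA.
Qed.

Lemma comp_del (A : {set T}) w v : w \in A -> v \in A -> v != w -> e w v -> comp A <= comp (A :\ w).
Proof.
move=> wA vA vw ewv.
have repP K : K \in [set cls A x | x in A] -> exists2 y, y \in K & y \in A :\ w.
  case/imsetP => x xA ->; case: (eqVneq x w) => [->|xw].
    exists v; last by rewrite !inE vw vA.
    by rewrite inE vA; apply: connect1; rewrite /rel_in ewv wA vA.
  by exists x; [exact: cls_self | rewrite !inE xw xA].
pose rep K := odflt w [pick y in K :&: (A :\ w)].
have repK K : K \in [set cls A x | x in A] -> rep K \in K /\ rep K \in A :\ w.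
  move=> HK; rewrite /rep; case: pickP => [y|] /=.
    by rewrite inE => /andP[].
  by case: (repP K HK) => y yK yA /(_ y); rewrite inE yK yA.
pose g K := cls (A :\ w) (rep K).
rewrite /comp -(card_in_imset (f := g)); last first.
  move=> K1 K2 H1 H2 Heq.
  case: (repK K1 H1) => r1K r1A; case: (repK K2 H2) => r2K r2A.
  have : rep K1 \in g K2 by rewrite -Heq /g cls_self.
  rewrite /g inE => /andP[_ Hc].
  have Hc' : connect (rel_in A) (rep K2) (rep K1).
    apply: connect_sub Hc => a b; rewrite /rel_in => /andP[/andP[eab aA] bA].
    apply: connect1; rewrite eab; move: aA bA; rewrite !inE => /andP[_ ->] /andP[_ ->] //.
  case/imsetP: H1 => x1 x1A E1; case/imsetP: H2 => x2 x2A E2.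
  have E1' : K1 = cls A (rep K1) by rewrite E1 (cls_eq (x:=x1)) // -E1.
  have E2' : K2 = cls A (rep K2) by rewrite E2 (cls_eq (x:=x2)) // -E2.
  rewrite E1' E2'; apply: cls_eq; rewrite inE Hc'.
  by move: r1A; rewrite !inE => /andP[_ ->].
apply: subset_leq_card; apply/subsetP => K' /imsetP[K HK ->].
by apply/imsetP; exists (rep K) => //; case: (repK K HK).
Qed.
End Comp.
Section Step.
Variables (T : finType) (e : rel T).
Hypotheses (e_sym : symmetric e) (e_irr : irreflexive e).

Definition top (s : config T) : {set T} := [set u | s u].
Definition mu (s : config T) : nat :=
  #|T|.+1 * (#|T| - comp e (top s)) + #|top s|.

Lemma good_step (s : config T) (t : {set T}) :
  t != set0 -> t \subset enabled_set e s ->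
  exists s' : config T, mu s' < mu s /\
    (forall u, u \notin t -> s' u = s u) /\
    (forall u, u \in t -> cand_enabled e s u -> s' u).
Proof.
move=> tn0 tsub.
have compT (A : {set T}) : comp e A <= #|T| by apply: leq_trans (comp_le e A) (max_card _).
case: (boolP [exists u in t, cand_enabled e s u]) => [/existsP[c /andP[ct cc]]|nc].
- pose C := [set u in t | cand_enabled e s u].
  exists [ffun u => if (u \in t) && cand_enabled e s u then true else s u].
  split; last split.
  + have Etop : top [ffun u => if (u \in t) && cand_enabled e s u then true else s u]
        = top s :|: C.
      by apply/setP => u; rewrite !inE ffunE; case: (u \in t); case: (cand_enabled e s u); case: (s u).
    have Hdis : forall x, x \in C -> x \notin top s.
      by move=> x; rewrite !inE /cand_enabled => /andP[_ /andP[]].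
    have Hadj : forall a x, a \in top s -> x \in C -> ~~ e a x.
      move=> a x; rewrite !inE /cand_enabled => sa /andP[_ /andP[_ /forallP/(_ a)]].
      by rewrite e_sym sa; case: (e x a).
    have Cn0 : C != set0 by apply/set0Pn; exists c; rewrite inE ct cc.
    have H1 := comp_add Hdis Hadj Cn0.
    rewrite /mu Etop.
    have H2 := compT (top s :|: C).
    have H3 : #|top s :|: C| <= #|T| := max_card _.
    set a := comp e (top s) in H1 *; set a' := comp e (top s :|: C) in H1 H2 *.
    set x := #|top s :|: C| in H3 *.
    have Hk : (#|T| - a').+1 <= #|T| - a.
      by clear -H1 H2; lia.
    apply: (@leq_trans (#|T|.+1 * (#|T| - a').+1)).
      by rewrite mulnS addnC ltn_add2r ltnS.
    apply: leq_trans (leq_addr _ _); exact: leq_mul.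
  + by move=> u /negbTE ut; rewrite ffunE ut.
  + by move=> u ut cu; rewrite ffunE ut cu.
- case/set0Pn: tn0 => w wt.
  have : w \in enabled_set e s by apply: (subsetP tsub).
  rewrite inE /enabled.
  have -> : cand_enabled e s w = false.
    by apply/negbTE; move: nc; rewrite negb_exists => /forallP/(_ w); rewrite wt.
  rewrite orFb /withd_enabled => /andP[sw /existsP[v /andP[ewv sv]]].
  exists [ffun u => if u == w then false else s u].
  split; last split.
  + have Etop : top [ffun u => if u == w then false else s u] = top s :\ w.
      by apply/setP => u; rewrite !inE ffunE; case: (u == w).
    have vw : v != w by apply/eqP => Evw; move: ewv; rewrite Evw e_irr.
    have H1 := comp_del e_sym (A:=top s) (w:=w) (v:=v).
    rewrite !inE in H1; have {}H1 := H1 sw sv vw ewv.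
    have Hc : #|top s :\ w| < #|top s|.
      by rewrite (cardsD1 w (top s)) inE sw.
    rewrite /mu Etop -addnS; apply: leq_add; last exact: Hc.
    by apply: leq_mul => //; apply: leq_sub2l.
  + move=> u ut; rewrite ffunE; case: eqP => // Euw.
    by rewrite Euw wt in ut.
  + move=> u ut cu; exfalso; move: nc; rewrite negb_exists => /forallP/(_ u).
    by rewrite ut cu.
Qed.
End Step.

Lemma mu_bound (T : finType) (e : rel T) (s : config T) :
  mu e s <= #|T|.+1 * #|T| + #|T|.
Proof. by rewrite /mu; apply: leq_add; [apply: leq_mul => //; apply: leq_subr | apply: max_card]. Qed.

From mathcomp Require Import all_classical all_reals all_analysis.
From mathcomp Require Import lra ring.
Import Order.TTheory GRing.Theory Num.Theory.
Import numFieldNormedType.Exports.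
Local Open Scope classical_set_scope.
Local Open Scope ring_scope.

Section Prob.
Variables (R : realType) (T : finType) (e : rel T).

Lemma local_ge0 s t u b : 0 <= local_prob e R s t u b.
Proof. by rewrite /local_prob; case: ifP => _; [|case: ifP => _]; rewrite ?invr_ge0 ?ler0n. Qed.

Lemma local_sum s t u : local_prob e R s t u true + local_prob e R s t u false = 1.
Proof.
rewrite /local_prob; case: ifP => _ /=; first by rewrite addr0.
case: ifP => _; first by lra.
by case: (s u); rewrite /= ?addr0 ?add0r.
Qed.

Lemma trans_ge0 s t s' : 0 <= trans_prob e R s t s'.
Proof. by apply: prodr_ge0 => u _; apply: local_ge0. Qed.

Lemma trans_sum s t : \sum_(s' : config T) trans_prob e R s t s' = 1.
Proof.
rewrite /trans_prob.
have := bigA_distr_bigA (fun (u : T) (b : bool) => local_prob e R s t u b).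
move=> <-.
by apply: big1 => u _; rewrite big_bool /= local_sum.
Qed.

End Prob.

Section Reach.
Variables (R : realType) (T : finType) (e : rel T).
Hypotheses (e_sym : symmetric e) (e_irr : irreflexive e).
Variables (d : daemon T) (s0 : config T).
Hypothesis d_valid : valid_daemon e d.

Let c : R := (2^-1 : R) ^+ #|T|.
Notation reach := (reach_prob e R d).

Lemma c_gt0 : 0 < c.
Proof. by rewrite /c exprn_gt0 // invr_gt0 ltr0n. Qed.

Lemma c_le1 : c <= 1.
Proof. by rewrite /c exprn_ile1 // ?invr_ge0 ?ler0n // invf_le1 // ?ler1n // ltr0n. Qed.

Lemma good_trans s (t : {set T}) : t != finset.set0 -> t \subset enabled_set e s ->
  exists s', (mu e s' < mu e s)%N /\ c <= trans_prob e R s t s'.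
Proof.
move=> tn0 tsub; have [s' [Hmu [H1 H2]]] := good_step e_sym e_irr tn0 tsub.
exists s'; split => //; rewrite /c /trans_prob -prodr_const.
apply: ler_prod => u _; rewrite invr_ge0 ler0n /=.
rewrite /local_prob; case: ifP => [/andP[ut cu]|Hnc]; first by rewrite H2 //= ?eqxx /=; lra.
case: ifP => [_|Hnw]; first by [].
case: (boolP (u \in t)) => ut /=.
  have := fintype.subsetP tsub u ut; rewrite finset.in_set /enabled => /orP[cu|wu].
    by rewrite ut cu in Hnc.
  by rewrite ut wu in Hnw.
by rewrite H1 // eqxx /=; lra.
Qed.

Lemma reach0 h : reach 0 s0 h = if stable e (last s0 h) then 1 else 0.
Proof. by []. Qed.

Lemma reachS n h : reach n.+1 s0 h = if stable e (last s0 h) then 1 else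
  \sum_(s' : config T) trans_prob e R (last s0 h) (d (s0 :: h)) s' * reach n s0 (rcons h s').
Proof. by []. Qed.

Lemma reach_st n h : stable e (last s0 h) -> reach n s0 h = 1.
Proof. by case: n => [|n] st; rewrite ?reach0 ?reachS st. Qed.

Lemma reach_ge0 n h : 0 <= reach n s0 h.
Proof.
elim: n h => [|n IH] h; first by rewrite reach0; case: ifP.
rewrite reachS; case: ifP => // _; apply: sumr_ge0 => s' _.
by apply: mulr_ge0; [apply: trans_ge0 | apply: IH].
Qed.

Lemma reach_le1 n h : reach n s0 h <= 1.
Proof.
elim: n h => [|n IH] h; first by rewrite reach0; case: ifP.
rewrite reachS; case: ifP => // _.
rewrite -(trans_sum R e (last s0 h) (d (s0 :: h))); apply: ler_sum => s' _.
by rewrite -{2}(mulr1 (trans_prob _ _ _ _ _)); apply: ler_wpM2l; [apply: trans_ge0 | apply: IH].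
Qed.

Lemma reach_mono n h : reach n s0 h <= reach n.+1 s0 h.
Proof.
elim: n h => [|n IH] h.
  rewrite reach0 reachS; case: ifP => // _.
  by apply: sumr_ge0 => s' _; apply: mulr_ge0; [apply: trans_ge0 | apply: reach_ge0].
rewrite reachS [X in _ <= X]reachS; case: ifP => // _; apply: ler_sum => s' _.
by apply: ler_wpM2l; [apply: trans_ge0 | apply: IH].
Qed.

Lemma reach_monoD n k h : reach n s0 h <= reach (n + k) s0 h.
Proof.
elim: k => [|k IH]; first by rewrite addn0.
by apply: le_trans IH _; rewrite addnS; apply: reach_mono.
Qed.

Lemma key (r : R) n : (forall h, r <= reach n s0 h) ->
  forall m h, (mu e (last s0 h) <= m)%N -> r + c ^+ m * (1 - r) <= reach (m + n) s0 h.
Proof.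
move=> Hr m; elim: m => [|m IH] h Hmu.
- case: (boolP (stable e (last s0 h))) => st.
    by rewrite add0n reach_st // expr0 mul1r addrC subrK.
  have := d_valid st => -[tn0 tsub].
  have [s' [Hlt _]] := good_trans tn0 tsub.
  by move: (leq_trans Hlt Hmu).
- rewrite addSn reachS; case: (boolP (stable e (last s0 h))) => st.
    have r1 : r <= 1 by apply: le_trans (Hr h) (reach_le1 _ _).
    have y0 : 0 <= c ^+ m.+1 by apply: exprn_ge0; apply: ltW c_gt0.
    have y1 : c ^+ m.+1 <= 1 by apply: exprn_ile1 => //; [apply: ltW c_gt0 | apply: c_le1].
    have : 0 <= (1 - r) * (1 - c ^+ m.+1) by apply: mulr_ge0; rewrite subr_ge0.
    by nra.
  have := d_valid st => -[tn0 tsub].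
  have [s1 [Hlt Hc]] := good_trans tn0 tsub.
  set P := trans_prob e R (last s0 h) (d (s0 :: h)).
  have Hs1 := IH (rcons h s1).
  rewrite last_rcons in Hs1; have {}Hs1 := Hs1 (leq_trans Hlt Hmu).
  have Hrest : forall s', r <= reach (m + n) s0 (rcons h s').
    by move=> s'; apply: le_trans (Hr (rcons h s')) _; rewrite addnC; apply: reach_monoD.
  have E : \sum_(s' : config T) P s' * reach (m + n) s0 (rcons h s') =
      r + \sum_(s' : config T) P s' * (reach (m + n) s0 (rcons h s') - r).
    rewrite -[X in X + _](mulr1 r) -(trans_sum R e (last s0 h) (d (s0 :: h))) -/P.
    rewrite mulr_sumr -big_split /=; apply: eq_bigr => s' _; ring.
  rewrite E lerD2l (bigD1 s1) //=.
  have Hge : 0 <= \sum_(s' | s' != s1) P s' * (reach (m + n) s0 (rcons h s') - r).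
    apply: sumr_ge0 => s' _; apply: mulr_ge0; first exact: trans_ge0.
    by rewrite subr_ge0.
  rewrite -[X in X <= _]addr0; apply: lerD; last exact: Hge.
  rewrite exprS -mulrA; apply: ler_pM.
  + by apply: ltW c_gt0.
  + apply: mulr_ge0; first by apply: exprn_ge0; apply: ltW c_gt0.
    by rewrite subr_ge0; apply: le_trans (Hr h) (reach_le1 _ _).
  + exact: Hc.
  + by rewrite lerBrDl.
Qed.

Lemma reach_lb k h :
  1 - (1 - c ^+ (#|T|.+1 * #|T| + #|T|)) ^+ k <= reach (k * (#|T|.+1 * #|T| + #|T|)) s0 h.
Proof.
set B := (#|T|.+1 * #|T| + #|T|)%N; set q := 1 - c ^+ B.
elim: k h => [|k IH] h; first by rewrite mul0n expr0 subrr; apply: reach_ge0.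
rewrite mulSn.
have := key IH (m := B) (h := h) (mu_bound e _).
apply: le_trans; rewrite le_eqVlt; apply/orP; left; apply/eqP.
rewrite exprS; set X := q ^+ k; rewrite /q; ring.
Qed.

End Reach.


Theorem mainTheorem18 (R : realType) (T : finType) (e : rel T)
  (e_sym : symmetric e) (e_irr : irreflexive e)
  (d : daemon T) (d_valid : valid_daemon e d) (s0 : config T) :
  reach_prob e R d n s0 [::] @[n --> \oo] --> (1 : R).
Proof.
set B := (#|T|.+1 * #|T| + #|T|)%N.
set c : R := (2^-1 : R) ^+ #|T|.
set q : R := 1 - c ^+ B.
have c0 : 0 < c by apply: c_gt0.
have c1 : c <= 1 by apply: c_le1.
have cB0 : 0 < c ^+ B by apply: exprn_gt0.
have cB1 : c ^+ B <= 1 by apply: exprn_ile1 => //; apply: ltW.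
have q0 : 0 <= q by rewrite /q subr_ge0.
have q1 : q < 1 by rewrite /q; lra.
have qn : `|q| < 1 by rewrite ger0_norm.
have Hq := cvg_expr qn.
apply/cvgrPdist_lt => eps eps0.
have := (cvgrPdist_lt _ _).1 Hq eps eps0.
case=> k0 _ Hk0.
have Hk : q ^+ k0 < eps.
  have := Hk0 k0 (leqnn k0); rewrite /= sub0r normrN ger0_norm //; exact: exprn_ge0.
exists (k0 * B)%N => // n /= Hn.
have H1 := reach_lb R e_sym e_irr s0 d_valid k0 [::].
have H2 := reach_monoD R e d s0 (k0 * B) (n - k0 * B) [::].
rewrite subnKC // in H2.
have H3 := reach_le1 R e d s0 n [::].
rewrite ger0_norm; last by rewrite subr_ge0.
rewrite -/c -/B -/q in H1.
lra.
Qed.
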